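(* Let $G$ be a finite simple graph and let $\{G_1,\dots,G_b\}$ be an edge decomposition of $G$ (i.e. $G_1,\dots,G_b$ are subgraphs of $G$ whose edge sets partition $E(G)$). Suppose that for each $i=1,\dots,b$, the simple graph $G_i$ has a triangle decomposition, and that $\Delta_0(G_i)\neq\emptyset$. Then $\Delta_0(G)\neq\emptyset$; that is, some multigraph in $\Gamma_0(G)$ has a triangle decomposition.
   Context: For a finite simple graph $G$ and a nonnegative integer $a$, $\Gamma_a(G)$ denotes the set of all multigraphs on the vertex set of $G$ obtained by assigning to the edges of $G$ the multiplicities $a,a+1,\dots,a+|E(G)|-1$, bijectively (each multiplicity used on exactly one edge; an edge with multiplicity $0$ is absent). A triangle decomposition of a (multi)graph is a partition of its edge multiset into triangles (copies of $K_3$). $\Delta_a(G)$ denotes the set of multigraphs in $\Gamma_a(G)$ that admit a triangle decomposition. *)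

(* Defs.v *)
From mathcomp Require Import all_boot.
Set Implicit Arguments. Unset Strict Implicit. Unset Printing Implicit Defensive.

(* A multigraph on V is a multiplicity function m : {set V} -> nat
   (only its values on 2-element sets matter). *)

Definition simple_graph (V : finType) (E : {set {set V}}) : Prop :=
  forall e, e \in E -> #|e| = 2.

Definition mult_of_graph (V : finType) (E : {set {set V}}) : {set V} -> nat :=
  fun e => if e \in E then 1 else 0.

(* A triangle decomposition of the multigraph m: a multiset t of triangles
   (3-element vertex sets, t S = number of copies of the triangle S) such that
   every pair e is covered exactly m e times. *)
Definition triangle_decomposable (V : finType) (m : {set V} -> nat) : Prop :=
  exists t : {set V} -> nat,
    (forall S, 0 < t S -> #|S| = 3) /\
    (forall e : {set V}, #|e| = 2 ->
       m e = \sum_(S : {set V} | e \subset S) t S).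

(* Gamma_a(G): multigraphs obtained by assigning bijectively the
   multiplicities a, a+1, ..., a+|E|-1 to the edges of G (0 elsewhere). *)
Definition in_Gamma (V : finType) (a : nat) (E : {set {set V}})
    (m : {set V} -> nat) : Prop :=
  (forall e, e \notin E -> m e = 0) /\
  perm_eq [seq m e | e <- enum E] (iota a #|E|).

Definition Delta_nonempty (V : finType) (a : nat) (E : {set {set V}}) : Prop :=
  exists m, in_Gamma a E m /\ triangle_decomposable m.

(* Main.v *)
Require Import Defs.
From mathcomp Require Import all_boot.

Lemma union2 (V : finType) (A B : {set {set V}}) :
  [disjoint A & B] ->
  triangle_decomposable (mult_of_graph A) -> Delta_nonempty 0 A ->
  triangle_decomposable (mult_of_graph B) -> Delta_nonempty 0 B ->
  triangle_decomposable (mult_of_graph (A :|: B)) /\ Delta_nonempty 0 (A :|: B).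
Proof.
move=> dAB [uA [uA3 uAd]] [mA [[mA0 mAp] [tA [tA3 tAd]]]]
  [uB [uB3 uBd]] [mB [[mB0 mBp] [tB [tB3 tBd]]]].
split.
  exists (fun S => uA S + uB S); split.
    move=> S; case: (posnP (uA S)) => [->|/uA3 //]; exact: uB3.
  move=> e he; rewrite big_split /= -uAd // -uBd //.
  rewrite /mult_of_graph in_setU.
  case eA: (e \in A); case eB: (e \in B) => //=.
  by rewrite (disjointFr dAB eA) in eB.
exists (fun e => mA e + mB e + #|B| * (e \in A)); split; last first.
  exists (fun S => tA S + tB S + #|B| * uA S); split.
    move=> S; case: (posnP (tA S)) => [->|/tA3 //].
    case: (posnP (tB S)) => [->|/tB3 //].
    case: (posnP (uA S)) => [->|/uA3 //]; by rewrite muln0.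
  move=> e he; rewrite big_split big_split /= -tAd // -tBd //.
  rewrite -big_distrr /= -uAd //.
split.
  move=> e; rewrite in_setU negb_or => /andP [nA nB].
  by rewrite mA0 // mB0 // (negbTE nA) muln0.
have pe : perm_eq (enum (A :|: B)) (enum A ++ enum B).
  apply: uniq_perm; first exact: enum_uniq.
    rewrite cat_uniq !enum_uniq andbT /=.
    apply/hasPn => x; rewrite !mem_enum => xB.
    apply/negP => xA; by rewrite (disjointFr dAB xA) in xB.
  by move=> x; rewrite mem_cat !mem_enum in_setU.
apply: perm_trans (perm_map _ pe) _; rewrite map_cat.
have -> : [seq mA e + mB e + #|B| * (e \in A) | e <- enum A] =
          [seq #|B| + i | i <- [seq mA e | e <- enum A]].
  rewrite -map_comp; apply/eq_in_map => e; rewrite mem_enum => eA /=.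
  have eB : e \notin B by rewrite (disjointFr dAB eA).
  by rewrite mB0 // eA muln1 addn0 addnC.
have -> : [seq mA e + mB e + #|B| * (e \in A) | e <- enum B] =
          [seq mB e | e <- enum B].
  apply/eq_in_map => e; rewrite mem_enum => eB /=.
  have eA : e \notin A by apply/negP => eA; rewrite (disjointFr dAB eA) in eB.
  by rewrite mA0 // (negbTE eA) muln0 addn0.
have -> : #|A :|: B| = #|B| + #|A|.
  by rewrite cardsU (disjoint_setI0 dAB) cards0 subn0 addnC.
rewrite iotaD add0n perm_catC; apply: perm_cat => //.
by rewrite -[#|B|]addn0 iotaDl addn0 perm_map.
Qed.

Lemma empty_ok (V : finType) :
  triangle_decomposable (mult_of_graph (set0 : {set {set V}})) /\
  Delta_nonempty 0 (set0 : {set {set V}}).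
Proof.
split.
  exists (fun _ => 0); split => // e _; by rewrite big1 // /mult_of_graph in_set0.
exists (fun _ => 0); split.
  split => // ; by rewrite enum_set0 cards0.
exists (fun _ => 0); split => // e _; by rewrite big1.
Qed.

Theorem mainTheorem3 (V : finType) (E : {set {set V}}) (b : nat)
    (Es : 'I_b -> {set {set V}}) :
  simple_graph E ->
  (forall e, (e \in E) = [exists i, e \in Es i]) ->
  (forall i j : 'I_b, i != j -> [disjoint Es i & Es j]) ->
  (forall i, triangle_decomposable (mult_of_graph (Es i))) ->
  (forall i, Delta_nonempty 0 (Es i)) ->
  Delta_nonempty 0 E.
Proof.
move=> _ hE hdis htri hdel.
pose F k := [set e | [exists i : 'I_b, (i < k) && (e \in Es i)]].
have key : forall k, k <= b ->
  triangle_decomposable (mult_of_graph (F k)) /\ Delta_nonempty 0 (F k).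
  elim=> [|k IH] hk.
    have -> : F 0 = set0.
      by apply/setP => e; rewrite !inE; apply/existsP => [[i]].
    exact: empty_ok.
  pose i0 : 'I_b := Ordinal hk.
  have -> : F k.+1 = F k :|: Es i0.
    apply/setP => e; rewrite !inE; apply/existsP/orP.
      move=> [i /andP [ik ei]]; rewrite ltnS leq_eqVlt in ik.
      case/orP: ik => [/eqP ik|ik].
        right; have -> : i0 = i by apply: val_inj; rewrite /= ik.
        done.
      by left; apply/existsP; exists i; rewrite ik.
    case=> [/existsP [i /andP [ik ei]]|ei].
      by exists i; rewrite ei ltnW.
    by exists i0; rewrite ei /= ltnSn.
  have [IH1 IH2] := IH (ltnW hk).
  apply: union2 => //.
  rewrite disjoint_sym; apply/pred0P => e /=.
  apply/negP => /andP [ei]; rewrite inE => /existsP [j /andP [jk ej]].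
  have nij : i0 != j by rewrite -val_eqE /= neq_ltn jk orbT.
  by rewrite (disjointFr (hdis _ _ nij) ei) in ej.
have [_ ] := key b (leqnn b).
suff -> : F b = E by [].
by apply/setP => e; rewrite hE inE; apply: eq_existsb => i; rewrite ltn_ord.
Qed.
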